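(* Let $\mathcal{H}$ be a hypertree, $T$ a host tree of $\mathcal{H}$, and $F$ a subset of $V(\mathcal{H})$ that induces a subtree of every host tree of $\mathcal{H}$ and is not a one-element set. Then: (1) if $uv$ is an edge of $T$ with $\{u,v\}\subseteq F$, then $I_\mathcal{H}(uv)\subseteq F$; (2) $F=\bigcup_{uv\in E(T[F])} I_\mathcal{H}(uv)$, and this union is connected.
   Context: A hypergraph $\mathcal{H}$ has a finite vertex set $V(\mathcal{H})$ and a finite family of nonempty subsets (edges). A host tree of $\mathcal{H}$ is a tree with vertex set $V(\mathcal{H})$ in which every edge of $\mathcal{H}$ induces a connected subgraph; $\mathcal{H}$ is a hypertree if it has a host tree. For $V'\subseteq V(\mathcal{H})$, $I_\mathcal{H}(V')$ is the intersection of all edges of $\mathcal{H}$ containing $V'$, or $V(\mathcal{H})$ if no edge contains $V'$; $I_\mathcal{H}(uv)$ means $I_\mathcal{H}(\{u,v\})$. A union of sets is connected if the intersection graph of the sets is connected. $T[F]$ is the subgraph of $T$ induced by $F$. *)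

(* Defs.v *)
From mathcomp Require Import all_boot.
Set Implicit Arguments. Unset Strict Implicit. Unset Printing Implicit Defensive.

(* A hypergraph on the finite vertex set V (a finType) is a finite family
   (a sequence, repetitions allowed) of nonempty subsets of V.
   A graph on V is given by a relation t : rel V (adjacency). *)

Definition hyp_edges_nonempty (V : finType) (E : seq {set V}) : Prop :=
  forall e, e \in E -> e != set0.

Definition induced (V : finType) (t : rel V) (A : {set V}) : rel V :=
  [rel x y | [&& t x y, x \in A & y \in A]].

Definition connected_on (V : finType) (t : rel V) (A : {set V}) : Prop :=
  forall x y, x \in A -> y \in A -> connect (induced t A) x y.

Definition acyclic_on (V : finType) (t : rel V) (A : {set V}) : Prop :=
  forall p : seq V, uniq p -> 3 <= size p -> ~~ cycle (induced t A) p.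

Definition is_tree_on (V : finType) (t : rel V) (A : {set V}) : Prop :=
  [/\ symmetric t, irreflexive t, A != set0, connected_on t A & acyclic_on t A].

Definition host_tree (V : finType) (E : seq {set V}) (t : rel V) : Prop :=
  is_tree_on t [set: V] /\ forall e, e \in E -> connected_on t e.

(* I_H(V') : intersection of all edges containing V' (the empty
   intersection being V). *)
Definition I_H (V : finType) (E : seq {set V}) (V' : {set V}) : {set V} :=
  \bigcap_(e <- E | V' \subset e) e.

(* The union of the family S of sets is connected: the intersection graph
   of the sets of S is connected. *)
Definition family_connected (V : finType) (S : {set {set V}}) : Prop :=
  forall X Y, X \in S -> Y \in S ->
    connect [rel A B | [&& A \in S, B \in S & A :&: B != set0]] X Y.

(* Main.v *)
Require Import Defs.
From mathcomp Require Import all_boot.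
Set Implicit Arguments. Unset Strict Implicit. Unset Printing Implicit Defensive.

Lemma induced_setT (V : finType) (t : rel V) : induced t setT =2 t.
Proof. by move=> a b; rewrite /induced /= !inE !andbT. Qed.

Lemma path_closed (T : Type) (e : rel T) (P : pred T) :
  (forall a b, P a -> e a b -> P b) -> forall x p, P x -> path e x p -> P (last x p).
Proof.
move=> cl x p; elim: p x => [|y p IH] x //= Px /andP[exy pth].
exact: IH (cl _ _ Px exy) pth.
Qed.

Lemma memI (V : finType) (E : seq {set V}) (S : {set V}) a :
  (forall e, e \in E -> S \subset e -> a \in e) -> a \in I_H E S.
Proof.
rewrite /I_H; elim: E => [|e E IH] H; first by rewrite big_nil inE.
rewrite big_cons; case: ifP => Se.
  rewrite inE (H e (mem_head _ _) Se) /=.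
  by apply: IH => f fE; apply: H; rewrite inE fE orbT.
by apply: IH => f fE; apply: H; rewrite inE fE orbT.
Qed.

Lemma Imem (V : finType) (E : seq {set V}) (S : {set V}) a e :
  a \in I_H E S -> e \in E -> S \subset e -> a \in e.
Proof.
rewrite /I_H; elim: E => [|f E IH] //; rewrite big_cons => + /predU1P[->|eE].
  by move=> + Se; rewrite Se inE => /andP[].
case: ifP => _; last by move=> H; exact: IH.
by rewrite inE => /andP[_ H]; exact: IH.
Qed.

Lemma acyc_false (V : finType) (t : rel V) p :
  acyclic_on t setT -> uniq p -> 3 <= size p -> cycle t p -> False.
Proof.
move=> acy up sp cp; move/negP: (acy p up sp); apply.
by apply: sub_cycle cp => a b tab; rewrite /induced /= !inE tab.
Qed.

Lemma cycle_of_path (T : Type) (e : rel T) x p :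
  path e x p -> e (last x p) x -> cycle e (x :: p).
Proof. by rewrite /= rcons_path => -> ->. Qed.

Definition rem_edge (V : finType) (t : rel V) (u v : V) : rel V :=
  [rel a b | t a b && ~~ (((a == u) && (b == v)) || ((a == v) && (b == u)))].
Definition add_edge (V : finType) (t : rel V) (x v : V) : rel V :=
  [rel a b | t a b || ((a == x) && (b == v)) || ((a == v) && (b == x))].

Lemma rem_edgeC (V : finType) (t : rel V) u v : rem_edge t u v =2 rem_edge t v u.
Proof.
move=> a b; rewrite /rem_edge /=; congr (_ && ~~ _).
by case: (a == u); case: (a == v); case: (b == u); case: (b == v).
Qed.

Lemma rem_edge_sym (V : finType) (t : rel V) u v :
  symmetric t -> symmetric (rem_edge t u v).
Proof.
move=> st a b; rewrite /rem_edge /= st; congr (_ && ~~ _).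
by case: (a == u); case: (a == v); case: (b == u); case: (b == v).
Qed.

Lemma L3 (V : finType) (t : rel V) u v :
  connected_on t setT -> forall w, connect (rem_edge t u v) u w || connect (rem_edge t u v) v w.
Proof.
move=> cont w.
have : connect t u w by rewrite -(eq_connect (induced_setT t)); apply: cont; rewrite inE.
case/connectP=> p pth ->.
apply: (path_closed (P := fun a => connect (rem_edge t u v) u a || connect (rem_edge t u v) v a)) pth; last by rewrite connect0.
move=> a b /orP Ha tab.
case t0ab : (rem_edge t u v a b).
  by case: Ha => H; rewrite (connect_trans H (connect1 t0ab)) ?orbT.
move: t0ab; rewrite /rem_edge /= tab /= => /negbFE /orP[] /andP[_ /eqP->];
  by rewrite connect0 ?orbT.
Qed.

Lemma key (V : finType) (E : seq {set V}) (t : rel V) (F : {set V}) (u v x : V) :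
  host_tree E t ->
  (forall t' : rel V, host_tree E t' -> is_tree_on t' F) ->
  t u v -> u \in F -> v \in F -> x \notin F ->
  (forall e, e \in E -> u \in e -> v \in e -> x \in e) ->
  connect (rem_edge t u v) u x -> False.
Proof.
move=> [[symt irrt nz cont acyt] Econ] HF tuv uF vF xF HI ux.
set t0 := rem_edge t u v.
set t' := add_edge t0 x v.
have sym0 : symmetric t0 by apply: rem_edge_sym.
have sub0 : subrel t0 t by move=> a b /andP[].
have uv : u != v by apply/eqP=> e; move: tuv; rewrite e irrt.
have xv : x != v by apply/eqP=> e; move: xF; rewrite e vF.
have xu : x != u by apply/eqP=> e; move: xF; rewrite e uF.
have L2 : ~ connect t0 u v.
  case/connectP=> p0 pth0 ev; move: ev; case/shortenP: pth0 => p pth up _ ev.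
  case: p pth up ev => [|y [|z p]] pth up ev.
  - by move: tuv; rewrite ev irrt.
  - move: pth ev => /= /andP[t0uy _] ev.
    by move: t0uy; rewrite -ev /t0 /rem_edge /= !eqxx andbF.
  apply: (acyc_false acyt up) => //; apply: cycle_of_path.
    exact: sub_path pth.
  by rewrite -ev symt.
have NX : connect t0 v x -> False.
  move=> vx; apply: L2; apply: connect_trans ux _; by rewrite (sym_connect_sym sym0).
have sym' : symmetric t'.
  move=> a b; rewrite /t' /add_edge /= sym0.
  by case: (a == x); case: (a == v); case: (b == x); case: (b == v); rewrite /= ?orbT ?orbF.
have sub0' : subrel t0 t' by move=> a b h; apply/orP; left; apply/orP; left.
have cr1 : t' x v by apply/orP; left; apply/orP; right; rewrite !eqxx.
have cr2 : t' v x by rewrite sym'.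
have tox a b : t' a b -> a != x -> b != x -> t0 a b.
  rewrite /t' /= => /orP[/orP[//|/andP[/eqP-> _]]|/andP[_ /eqP->]]; by rewrite eqxx.
have tov a b : t' a b -> a != v -> b != v -> t0 a b.
  rewrite /t' /= => /orP[/orP[//|/andP[_ /eqP->]]|/andP[/eqP-> _]]; by rewrite eqxx.
have tou a b : t a b -> a != u -> b != u -> t0 a b.
  by move=> tab au bu; rewrite /t0 /rem_edge /= tab (negbTE au) (negbTE bu) andbF.
have up0 : subrel (connect t0) (connect t').
  by move=> a b; apply: connect_sub => c d h; apply: connect1; apply: sub0'.
have Ht' : host_tree E t'.
  split; first split => //.
  - move=> a; apply/negP => /orP[/orP[/sub0|/andP[/eqP-> /eqP e]]|/andP[/eqP-> /eqP e]].
    + by rewrite irrt.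
    + by move: xv; rewrite e eqxx.
    + by move: xv; rewrite e eqxx.
  - move=> a b _ _; rewrite (eq_connect (induced_setT t')).
    have Cv w : connect t' v w.
      case/orP: (L3 u v cont w) => H; last exact: up0.
      apply: connect_trans (connect1 cr2) _; apply: up0.
      by apply: connect_trans _ H; rewrite (sym_connect_sym sym0).
    by apply: connect_trans (Cv b); rewrite (sym_connect_sym sym'). 
  - move=> p up sp; apply/negP => cp.
    have cp' : cycle t' p by apply: sub_cycle cp => a b /and3P[].
    case vp : (v \in p); last first.
      apply: (acyc_false acyt up sp); apply: (sub_cycle sub0).
      apply: (sub_in_cycle (P := predC1 v)) cp'.
        by move=> a b av bv h; apply: tov.
      by apply/allP => a ap; apply/eqP => e; rewrite -e ap in vp.
    case/rot_to: vp => i q eq.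
    move: cp' up sp; rewrite -(rot_cycle i) -(rot_uniq i) -(size_rot i) eq.
    case: q {eq} => [|y q] //=.
    rewrite rcons_path => /and3P[tvy pq tzv] /andP[vyq /andP[yq uq]] sp.
    have pq0 : path t0 y q.
      apply: (sub_in_path (P := predC1 v)) pq.
        by move=> a b av bv h; apply: tov.
      by apply/allP => a ap; apply/eqP => e; move: vyq; rewrite -e ap.
    have lv : last y q != v.
      by apply/eqP => e; move: vyq; rewrite -e mem_last.
    case: (eqVneq y x) => [yx|yx].
      case: (eqVneq (last y q) x) => [lx|lx].
        case: q {pq pq0 tzv uq lv vyq} sp yq lx => [|z q] //= _.
        by rewrite yx => xzq lx; move: xzq; rewrite -lx mem_last.
      apply: NX; rewrite (sym_connect_sym sym0) -yx; apply/connectP.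
      exists (rcons q v); last by rewrite last_rcons.
      by rewrite rcons_path pq0 /=; apply: tox => //; rewrite eq_sym.
    have t0vy : t0 v y by apply: tox => //; rewrite eq_sym.
    case: (eqVneq (last y q) x) => [lx|lx].
      by apply: NX; apply/connectP; exists (y :: q) => //=; rewrite t0vy.
    apply: (acyc_false acyt (p := v :: y :: q)) => //=.
      by rewrite vyq yq uq.
    apply: (cycle_of_path (e := t) (x := v) (p := y :: q)).
      by apply: (sub_path sub0); rewrite /= t0vy.
    by apply: sub0; apply: tox => //; rewrite eq_sym.
  - move=> e eE.
    have symi : symmetric (induced t' e).
      by move=> a b; rewrite /induced /= [t' a b]sym' [(a \in e) && _]andbC.
    have Cuv : u \in e -> v \in e -> connect (induced t' e) u v.
      move=> ue ve; have xe := HI e eE ue ve.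
      have := Econ e eE u x ue xe.
      case/connectP=> p0 pth0 ex; move: ex; case/shortenP: pth0 => p pth up _ ex.
      case: p pth up ex => [|y p] /=; first by move=> _ _ eux; move: xu; rewrite eux eqxx.
      case/andP=> /and3P[tuy _ ye] pth /andP[uyp _] ex.
      have allu : all (predC1 u) (y :: p).
        by apply/allP => a ap; apply/eqP => ea; move: uyp; rewrite -ea ap.
      case: (eqVneq y v) => [yv|yv].
        exfalso; apply: NX; apply/connectP; exists p; last by rewrite -yv.
        rewrite -yv; apply: (sub_in_path (P := predC1 u)) allu pth.
        by move=> a b au bu /and3P[tab _ _]; apply: tou.
      apply: (@connect_trans _ _ x u v); last first.
        by apply: connect1; rewrite /induced /= cr1 xe ve.
      apply/connectP; exists (y :: p) => //=.
      rewrite /induced /= ue ye andbT.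
      have -> : t' u y by apply: sub0'; rewrite /t0 /rem_edge /= tuy eqxx (negbTE yv) (negbTE uv).
      rewrite /=.
      apply: (sub_in_path (P := predC1 u)) allu pth.
      move=> a b au bu /and3P[tab ae be]; rewrite /induced /= ae be !andbT.
      by apply: sub0'; apply: tou.
    move=> a b ae be; move: (Econ e eE a b ae be); apply: connect_sub.
    move=> c d /and3P[tcd ce de].
    case t0cd : (t0 c d).
      by apply: connect1; rewrite /induced /= ce de (sub0' _ _ t0cd).
    move: t0cd; rewrite /t0 /rem_edge /= tcd /= => /negbFE /orP[]/andP[/eqP ec /eqP ed].
      by rewrite ec ed; apply: Cuv; rewrite -?ec -?ed.
    by rewrite ec ed (sym_connect_sym symi); apply: Cuv; rewrite -?ec -?ed.
have [_ _ _ Fcon _] := HF t' Ht'.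
have : subrel (induced t' F) t0.
  move=> a b /and3P[tab aF bF]; apply: tox tab _ _.
    by apply/eqP=> ea; move: xF; rewrite -ea aF.
  by apply/eqP=> ea; move: xF; rewrite -ea bF.
move=> H0; have H := connect_sub (fun a b h => connect1 (H0 a b h)); apply: L2; apply: H.
apply: Fcon uF vF.
Qed.

Lemma I_l (V : finType) (E : seq {set V}) a b : a \in I_H E [set a; b].
Proof. by apply: memI => e _ /subsetP; apply; rewrite !inE eqxx. Qed.
Lemma I_r (V : finType) (E : seq {set V}) a b : b \in I_H E [set a; b].
Proof. by apply: memI => e _ /subsetP; apply; rewrite !inE eqxx orbT. Qed.

Theorem mainTheorem3 (V : finType) (E : seq {set V}) (t : rel V) (F : {set V}) :
  hyp_edges_nonempty E ->
  host_tree E t ->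
  (forall t' : rel V, host_tree E t' -> is_tree_on t' F) ->
  #|F| != 1 ->
  (forall u v, t u v -> u \in F -> v \in F -> I_H E [set u; v] \subset F) /\
  (F = \bigcup_(p : V * V | [&& t p.1 p.2, p.1 \in F & p.2 \in F])
          I_H E [set p.1; p.2] /\
   family_connected
     [set I_H E [set p.1; p.2] | p : V * V in [set q : V * V | [&& t q.1 q.2, q.1 \in F & q.2 \in F]]]).
Proof.
move=> Hne Ht HF F1.
have [[symt irrt nz cont acyt] Econ] := Ht.
have P1 : forall u v, t u v -> u \in F -> v \in F -> I_H E [set u; v] \subset F.
  move=> u v tuv uF vF; apply/subsetP => x xI; apply/negPn/negP => xF.
  have HI e : e \in E -> u \in e -> v \in e -> x \in e.
    by move=> eE ue ve; apply: (Imem xI eE); rewrite subUset !sub1set ue ve.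
  case/orP: (L3 u v cont x) => H.
    exact: (key Ht HF tuv uF vF xF HI H).
  apply: (key Ht HF (u := v) (v := u) _ vF uF xF).
  - by rewrite symt.
  - by move=> e eE ve ue; apply: HI.
  - by rewrite (eq_connect (rem_edgeC t v u)).
have [_ _ Fnz Fcon _] := HF t Ht.
have nb w : w \in F -> exists2 z, t w z & z \in F.
  move=> wF.
  have : F :\ w != set0.
    rewrite -cards_eq0; apply: contra F1 => /eqP c.
    by rewrite (cardsD1 w) wF c.
  case/set0Pn => y; rewrite in_setD1 => /andP[yw yF].
  case/connectP: (Fcon w y wF yF) => [[|z s]] /=.
    by move=> _ ey; move: yw; rewrite ey eqxx.
  by case/andP=> /and3P[twz _ zF] _ _; exists z.
split => //; split.
  apply/setP => w; apply/idP/idP.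
    move=> wF; have [z twz zF] := nb w wF.
    by apply/bigcupP; exists (w, z); [rewrite /= twz wF zF | exact: I_l].
  by case/bigcupP => p /and3P[tp p1 p2] wI; exact: (subsetP (P1 _ _ tp p1 p2)).
move=> X Y /imsetP[p pin ->] /imsetP[q qin ->].
have memS r : r \in [set q : V * V | [&& t q.1 q.2, q.1 \in F & q.2 \in F]] ->
   I_H E [set r.1; r.2] \in [set I_H E [set p.1; p.2] | p : V * V in [set q : V * V | [&& t q.1 q.2, q.1 \in F & q.2 \in F]]].
  by move=> rin; apply: imset_f.
move: (pin) (qin); rewrite !inE => /and3P[_ p1F _] /and3P[_ q1F _].
case/connectP: (Fcon p.1 q.1 p1F q1F) => s.
elim: s p pin {p1F} => [|b s IH] p pin /= pth lq.
  apply: connect1; rewrite /= !memS //; apply/set0Pn; exists p.1.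
  by rewrite inE I_l lq I_l.
case/andP: pth => /and3P[tpb pF bF] pth.
have rin : (b, p.1) \in [set q : V * V | [&& t q.1 q.2, q.1 \in F & q.2 \in F]].
  by rewrite inE /= bF pF symt tpb.
apply: connect_trans (IH _ rin pth lq).
have := memS _ rin; rewrite /= => mr.
apply: connect1; rewrite /= memS // mr /=; apply/set0Pn; exists p.1.
by rewrite inE I_l I_r.
Qed.
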